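(* For $\sigma>0$ and $k\ge 0$, define the price-to-delta ratio $$C_{\mathcal D}(\sigma;k)=\frac{C_{\mathrm{BS}}(\sigma;k)}{\Phi(d_1(\sigma;k))}=1-e^k\frac{\Phi(d_2(\sigma;k))}{\Phi(d_1(\sigma;k))}=1-\frac{R(-d_2(\sigma;k))}{R(-d_1(\sigma;k))}.$$ Then $C_{\mathcal D}(\sigma;k)$ is monotonically increasing in $\sigma>0$ for each fixed $k\ge0$, and monotonically decreasing in $k\ge 0$ for each fixed $\sigma>0$.
   Context: Let $\Phi$ and $\phi$ denote the standard normal distribution function and density, and let $R(x)=\Phi(-x)/\phi(x)$ be the Mills ratio. For $\sigma>0$, $k\ge 0$ put $d_1(\sigma;k)=-k/\sigma+\sigma/2$, $d_2(\sigma;k)=-k/\sigma-\sigma/2$, and $C_{\mathrm{BS}}(\sigma;k)=\Phi(d_1(\sigma;k))-e^k\,\Phi(d_2(\sigma;k))$. *)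

(* Defs.v *)
From Stdlib Require Import Reals.
From Coquelicot Require Import Coquelicot.
Open Scope R_scope.

Definition phi (x : R) : R := exp (- x ^ 2 / 2) / sqrt (2 * PI).

Definition Phi (x : R) : R :=
  RInt_gen phi (Rbar_locally m_infty) (at_point x).

Definition Mills (x : R) : R := Phi (- x) / phi x.

Definition d1 (sigma k : R) : R := - k / sigma + sigma / 2.
Definition d2 (sigma k : R) : R := - k / sigma - sigma / 2.

Definition C_BS (sigma k : R) : R :=
  Phi (d1 sigma k) - exp k * Phi (d2 sigma k).

Definition C_D (sigma k : R) : R := C_BS sigma k / Phi (d1 sigma k).

(* Main.v *)
Require Import Defs.
From Stdlib Require Import Reals Lra Psatz.
From Coquelicot Require Import Coquelicot.
Open Scope R_scope.

Lemma phi_pos x : 0 < phi x.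
Proof.
  unfold phi. apply Rdiv_lt_0_compat. apply exp_pos.
  apply sqrt_lt_R0. generalize PI_RGT_0; lra.
Qed.

Lemma phi_deriv x : is_derive phi x (- x * phi x).
Proof.
  unfold phi. auto_derive. auto.
  replace (- (x * (x * 1)) * / 2) with (- x ^ 2 / 2) by (simpl; field).
  match goal with |- ?a = ?b => change (@eq R a b) end. field. apply Rgt_not_eq, sqrt_lt_R0. generalize PI_RGT_0; lra.
Qed.

Lemma Derive_phi x : Derive phi x = - x * phi x.
Proof. apply is_derive_unique, phi_deriv. Qed.

Lemma phi_cont x : continuous phi x.
Proof. apply (@ex_derive_continuous R_AbsRing R_NormedModule phi x). eexists; apply phi_deriv. Qed.

Lemma phi_le_exp t : phi t <= exp (t + /2).
Proof.
  unfold phi.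
  assert (H1 : 1 <= sqrt (2 * PI)).
  { rewrite <- sqrt_1. apply sqrt_le_1_alt. generalize PI_RGT_0. 
    generalize PI2_1; lra. }
  apply Rle_trans with (exp (- t ^ 2 / 2)).
  - assert (Hi : 0 < / sqrt (2 * PI) <= 1).
    { split. apply Rinv_0_lt_compat; lra. rewrite <- Rinv_1. apply Rinv_le_contravar; lra. }
    generalize (exp_pos (- t ^ 2 / 2)). unfold Rdiv at 1. nra.
  - assert (Hq : - t ^ 2 / 2 <= t + /2) by (assert (0 <= (t+1)*(t+1)) by apply Rle_0_sqr; simpl; lra).
    destruct (Rle_lt_or_eq_dec _ _ Hq).
    left; apply exp_increasing; auto. rewrite e; lra.
Qed.

Lemma phi_le_1 t : phi t <= 1.
Proof.
  unfold phi.
  assert (H1 : 1 <= sqrt (2 * PI)).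
  { rewrite <- sqrt_1. apply sqrt_le_1_alt. generalize PI_RGT_0. 
    generalize PI2_1; lra. }
  assert (exp (- t ^ 2 / 2) <= 1).
  { rewrite <- exp_0. assert (Hq : - t ^ 2 / 2 <= 0) by (assert (0 <= t*t) by apply Rle_0_sqr; simpl; lra). destruct (Rle_lt_or_eq_dec _ _ Hq).
    left; apply exp_increasing; auto. rewrite e; lra. }
  apply Rle_trans with (exp (- t ^ 2 / 2)); auto.
  assert (Hi : 0 < / sqrt (2 * PI) <= 1).
  { split. apply Rinv_0_lt_compat; lra. rewrite <- Rinv_1. apply Rinv_le_contravar; lra. }
  generalize (exp_pos (- t ^ 2 / 2)). unfold Rdiv at 1. nra.
Qed.

Lemma ex_RInt_phi a b : ex_RInt phi a b.
Proof. apply (@ex_RInt_continuous R_CompleteNormedModule); intros; apply phi_cont. Qed.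

Lemma is_RInt_expsh a b : is_RInt (fun t => exp (t + /2)) a b (exp (b + /2) - exp (a + /2)).
Proof.
  apply (is_RInt_derive (fun t => exp (t + /2)) (fun t => exp (t + /2))).
  - intros x _. auto_derive; auto. ring.
  - intros x _. apply (@ex_derive_continuous R_AbsRing R_NormedModule (fun t => exp (t + /2)) x).
    auto_derive; auto.
Qed.

Lemma RInt_phi_bound a b : a <= b -> 0 <= RInt phi a b <= exp (b + /2) - exp (a + /2).
Proof.
  intros Hab. split.
  - apply RInt_ge_0; auto. apply ex_RInt_phi. intros; left; apply phi_pos.
  - apply (is_RInt_le phi (fun t => exp (t + /2)) a b); auto.
    apply (@RInt_correct R_CompleteNormedModule), ex_RInt_phi. apply is_RInt_expsh.
    intros; apply phi_le_exp.
Qed.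

Lemma RInt_phi_chasles a b c : RInt phi a b + RInt phi b c = RInt phi a c.
Proof. apply (@RInt_Chasles R_CompleteNormedModule); apply ex_RInt_phi. Qed.

Lemma Phi_ex x : exists l, is_RInt_gen phi (Rbar_locally m_infty) (at_point x) l /\ 0 <= l <= exp (x + /2).
Proof.
  set (F := filter_prod (Rbar_locally m_infty) (at_point x)).
  set (f := fun ab : R * R => RInt phi (fst ab) (snd ab)).
  assert (PF : ProperFilter F) by (apply filter_prod_proper; apply _).
  destruct (proj1 (filterlim_locally_cauchy (U := R_CompleteSpace) f)) as [l Hl].
  - intros eps. exists (fun ab : R * R => fst ab < ln eps - /2 /\ snd ab = x). split.
    + apply (Filter_prod _ _ _ (fun a => a < ln eps - /2) (fun b => b = x)).
      * exists (ln eps - /2). auto.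
      * reflexivity.
      * simpl; auto.
    + intros [a b] [a' b'] [Ha Hb] [Ha' Hb']. simpl in *. subst b b'.
      unfold f; simpl. change (Rabs (RInt phi a' x - RInt phi a x) < eps).
      assert (Heps : exp (ln eps) = eps) by (apply exp_ln; apply cond_pos).
      assert (forall u v, u <= v -> v < ln eps - /2 -> Rabs (RInt phi u x - RInt phi v x) < eps).
      { intros u v Huv Hv.
        assert (E : RInt phi u x - RInt phi v x = RInt phi u v)
          by (rewrite <- (RInt_phi_chasles u v x); ring).
        rewrite E.
        destruct (RInt_phi_bound u v Huv). rewrite Rabs_right by lra.
        assert (exp (v + /2) < eps). { rewrite <- Heps. apply exp_increasing. lra. }
        generalize (exp_pos (u + /2)); lra. }
      destruct (Rle_or_lt a a').
      * rewrite Rabs_minus_sym. apply H; auto.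
      * apply H; lra.
  - exists l. split.
    + refine (filterlimi_lim_ext (F := F) f _ _ Hl). intros [a b]; unfold f; simpl.
      apply (@RInt_correct R_CompleteNormedModule), ex_RInt_phi.
    + assert (Hev : F (fun ab => 0 <= f ab <= exp (x + /2))).
      { apply (Filter_prod _ _ _ (fun a => a < x) (fun b => b = x)).
        exists x; auto. reflexivity. intros a b Ha Hb; subst b. unfold f; simpl.
        destruct (RInt_phi_bound a x) as [H1 H2]; try lra.
        generalize (exp_pos (a + /2)); lra. }
      split.
      * apply (filterlim_le (F := F) (fun _ => 0) f 0 l).
        eapply filter_imp; [|exact Hev]; simpl; intros; tauto.
        apply filterlim_const. exact Hl.
      * apply (filterlim_le (F := F) f (fun _ => exp (x + /2)) l (exp (x + /2))).
        eapply filter_imp; [|exact Hev]; simpl; intros; tauto.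
        exact Hl. apply filterlim_const.
Qed.

Lemma Phi_is x : is_RInt_gen phi (Rbar_locally m_infty) (at_point x) (Phi x) /\ 0 <= Phi x <= exp (x + /2).
Proof.
  destruct (Phi_ex x) as [l [H B]].
  assert (E : Phi x = l).
  { unfold Phi. apply (@is_RInt_gen_unique R_CompleteNormedModule); auto; apply _. }
  rewrite E; auto.
Qed.

Lemma Phi_chasles a b : Phi b = Phi a + RInt phi a b.
Proof.
  assert (H := is_RInt_gen_Chasles (Fa := Rbar_locally m_infty) (Fc := at_point b) phi a _ _ (proj1 (Phi_is a))
     (proj2 (is_RInt_gen_at_point phi a b _) (@RInt_correct R_CompleteNormedModule _ _ _ (ex_RInt_phi a b)))).
  unfold Phi at 1. apply (@is_RInt_gen_unique R_CompleteNormedModule); try apply _. exact H.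
Qed.

Lemma Phi_pos x : 0 < Phi x.
Proof.
  rewrite (Phi_chasles (x - 1) x).
  assert (0 < RInt phi (x - 1) x).
  { apply RInt_gt_0. lra. intros; apply phi_pos. intros; apply phi_cont. }
  destruct (Phi_is (x - 1)). lra.
Qed.

Lemma Phi_le x : Phi x <= exp (x + /2).
Proof. apply (Phi_is x). Qed.

Lemma Phi_deriv x : is_derive Phi x (phi x).
Proof.
  apply is_derive_ext with (fun b => Phi 0 + RInt phi 0 b).
  intros; symmetry; apply Phi_chasles.
  replace (phi x) with (@plus R_AbelianGroup zero (phi x)) by apply plus_zero_l.
  apply (@is_derive_plus R_AbsRing R_NormedModule (fun _ => Phi 0) (RInt phi 0) x zero (phi x)).
  apply (@is_derive_const R_AbsRing R_NormedModule).
  apply (is_derive_RInt phi (RInt phi 0) 0 x).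
  apply filter_forall; intros; apply (@RInt_correct R_CompleteNormedModule), ex_RInt_phi.
  apply phi_cont.
Qed.

Lemma Derive_Phi x : Derive Phi x = phi x.
Proof. apply is_derive_unique, Phi_deriv. Qed.
Lemma ex_derive_Phi x : ex_derive Phi x.
Proof. eexists; apply Phi_deriv. Qed.
Lemma ex_derive_phi x : ex_derive phi x.
Proof. eexists; apply phi_deriv. Qed.

Lemma mono_deriv f df a b : a <= b -> (forall x, a <= x <= b -> is_derive f x (df x)) ->
  (forall x, a <= x <= b -> 0 <= df x) -> f a <= f b.
Proof.
  intros Hab Hd Hp.
  destruct (MVT_gen f a b df) as [c [Hc E]].
  - intros x Hx. rewrite Rmin_left, Rmax_right in Hx by lra. apply Hd; lra.
  - intros x Hx. rewrite Rmin_left, Rmax_right in Hx by lra.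
    apply continuity_pt_filterlim.
    apply (@ex_derive_continuous R_AbsRing R_NormedModule). eexists; apply Hd; lra.
  - rewrite Rmin_left, Rmax_right in Hc by lra.
    assert (0 <= df c) by (apply Hp; lra). nra.
Qed.

Lemma small_at_minf eps : 0 < eps -> exists M, forall y, y < M ->
  Rabs (y * exp (y + /2)) < eps /\ exp (y + /2) < eps.
Proof.
  intros He.
  assert (Hc : 0 < exp (/2)) by apply exp_pos.
  pose proof (proj2 (is_lim_spec _ _ _) is_lim_mul_exp_m (mkposreal (eps / exp (/2)) ltac:(apply Rdiv_lt_0_compat; auto))) as [M1 H1].
  pose proof (proj2 (is_lim_spec _ _ _) is_lim_exp_m (mkposreal (eps / exp (/2)) ltac:(apply Rdiv_lt_0_compat; auto))) as [M2 H2].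
  exists (Rmin M1 M2). intros y Hy. simpl in *.
  assert (y < M1) by (generalize (Rmin_l M1 M2); lra).
  assert (y < M2) by (generalize (Rmin_r M1 M2); lra).
  specialize (H1 y H). specialize (H2 y H0).
  rewrite Rminus_0_r in H1, H2. rewrite exp_plus.
  split.
  - rewrite <- Rmult_assoc, Rabs_mult, (Rabs_right (exp (/2))) by lra.
    apply (Rmult_lt_compat_r (exp (/2))) in H1; auto.
    unfold Rdiv in H1. rewrite Rmult_assoc, Rinv_l in H1 by lra. lra.
  - rewrite Rabs_right in H2 by (left; apply exp_pos).
    apply (Rmult_lt_compat_r (exp (/2))) in H2; auto.
    unfold Rdiv in H2. rewrite Rmult_assoc, Rinv_l in H2 by lra. lra.
Qed.

Lemma nonneg_tail (G : R -> R) : (forall u v, u <= v -> G u <= G v) ->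
  (forall y, y < 0 -> - Rabs (y * exp (y + /2)) - exp (y + /2) <= G y) -> forall x, 0 <= G x.
Proof.
  intros Hm Hl x. destruct (Rle_or_lt 0 (G x)) as [|Hx]; auto.
  destruct (small_at_minf (- G x / 2)) as [M HM]. lra.
  set (y := Rmin (Rmin x 0) M - 1).
  assert (y <= x /\ y < 0 /\ y < M) as [H1 [H2 H3]].
  { unfold y. generalize (Rmin_l (Rmin x 0) M) (Rmin_r (Rmin x 0) M) (Rmin_l x 0) (Rmin_r x 0). lra. }
  specialize (HM y H3). specialize (Hl y H2). specialize (Hm y x H1). lra.
Qed.

Lemma Phi_neq0 x : Phi x <> 0.
Proof. apply Rgt_not_eq, Phi_pos. Qed.
Lemma phi_neq0 x : phi x <> 0.
Proof. apply Rgt_not_eq, phi_pos. Qed.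

Ltac dtac := auto_derive; [repeat split; auto using ex_derive_Phi, ex_derive_phi, Phi_neq0, phi_neq0 | ];
  change (fun x0 : R => Phi x0) with Phi in *; change (fun x0:R => phi x0) with phi in *;
  rewrite ?Derive_Phi, ?Derive_phi; try match goal with |- ?a = ?b => change (@eq R a b) end.

Definition EE x := x * Phi x + phi x.
Lemma EE_nonneg x : 0 <= EE x.
Proof.
  apply nonneg_tail.
  - intros u v Huv. apply (mono_deriv EE Phi); auto.
    intros z _. unfold EE. dtac. ring.
    intros z _. left; apply Phi_pos.
  - intros y Hy. unfold EE. generalize (Phi_le y) (Phi_pos y) (phi_pos y) (exp_pos (y + /2)).
    intros. rewrite Rabs_left1 by nra. nra.
Qed.

Definition FF x := (1 + x ^ 2) * Phi x + x * phi x.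
Lemma FF_nonneg x : 0 <= FF x.
Proof.
  apply nonneg_tail.
  - intros u v Huv. apply (mono_deriv FF (fun z => 2 * EE z)); auto.
    intros z _. unfold FF, EE. dtac. ring.
    intros z _. generalize (EE_nonneg z); lra.
  - intros y Hy. unfold FF. generalize (phi_le_exp y) (Phi_pos y) (phi_pos y) (exp_pos (y + /2)).
    intros. rewrite Rabs_left1 by nra. nra.
Qed.

Definition VV x := Phi x * (Phi x - x * phi x) - phi x ^ 2.
Lemma VV_nonneg x : 0 <= VV x.
Proof.
  apply nonneg_tail.
  - intros u v Huv. apply (mono_deriv VV (fun z => phi z * FF z)); auto.
    intros z _. unfold VV, FF. dtac. ring.
    intros z _. generalize (FF_nonneg z) (phi_pos z); nra.
  - intros y Hy. unfold VV. generalize (phi_le_exp y) (Phi_pos y) (phi_pos y) (exp_pos (y + /2)) (phi_le_1 y)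
      (Rabs_pos (y * exp (y + /2))).
    intros.
    assert (0 <= Phi y * Phi y) by nra.
    assert (0 <= - y * Phi y * phi y) by (apply Rmult_le_pos; nra).
    assert (phi y ^ 2 <= phi y) by nra.
    nra.
Qed.

Definition WW x := x + phi x / Phi x.
Lemma WW_mono u v : u <= v -> WW u <= WW v.
Proof.
  intros Huv. apply (mono_deriv WW (fun z => VV z / Phi z ^ 2)); auto.
  - intros z _. unfold WW, VV. dtac. field. apply Phi_neq0.
  - intros z _. apply Rdiv_le_0_compat. apply VV_nonneg. apply pow_lt, Phi_pos.
Qed.

Definition PP x := x * Phi x / phi x.
Lemma PP_mono u v : u <= v -> PP u <= PP v.
Proof.
  intros Huv. apply (mono_deriv PP (fun z => FF z / phi z)); auto.
  - intros z _. unfold PP, FF. dtac. field. apply phi_neq0.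
  - intros z _. apply Rdiv_le_0_compat. apply FF_nonneg. apply phi_pos.
Qed.

Definition gfun (s k : R) := exp k * Phi (Defs.d2 s k) / Phi (Defs.d1 s k).

Lemma CD_eq (s k : R) : C_D s k = 1 - gfun s k.
Proof. unfold C_D, C_BS, gfun. field. apply Phi_neq0. Qed.

Lemma g_mono_k (s k1 k2 : R) : 0 < s -> k1 <= k2 -> gfun s k1 <= gfun s k2.
Proof.
  intros Hs Hk. assert (Hs0 : s <> 0) by lra.
  apply (mono_deriv (fun k => gfun s k) (fun k => exp k / s *
     (s * Phi (Defs.d1 s k) * Phi (Defs.d2 s k) - phi (Defs.d2 s k) * Phi (Defs.d1 s k) + Phi (Defs.d2 s k) * phi (Defs.d1 s k))
     / Phi (Defs.d1 s k) ^ 2)); auto.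
  - intros z _. unfold gfun, Defs.d1, Defs.d2. dtac. unfold Rdiv, Rminus. field. split; auto using Phi_neq0.
  - intros z _. set (A := Defs.d1 s z). set (B := Defs.d2 s z).
    assert (HAB : A - B = s) by (unfold A, B, Defs.d1, Defs.d2; lra).
    assert (HW : WW B <= WW A) by (apply WW_mono; lra).
    assert (E : s * Phi A * Phi B - phi B * Phi A + Phi B * phi A = Phi A * Phi B * (WW A - WW B)).
    { unfold WW. rewrite <- HAB. field. split; apply Phi_neq0. }
    rewrite E. apply Rdiv_le_0_compat. 2: apply pow_lt, Phi_pos.
    apply Rmult_le_pos. apply Rdiv_le_0_compat. left; apply exp_pos. lra.
    generalize (Phi_pos A) (Phi_pos B). intros. apply Rmult_le_pos. nra. lra.
Qed.

Lemma g_mono_s (k s1 s2 : R) : 0 < s1 -> s1 <= s2 -> gfun s2 k <= gfun s1 k.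
Proof.
  intros Hs Hk.
  cut (- gfun s1 k <= - gfun s2 k). lra.
  apply (mono_deriv (fun s => - gfun s k) (fun s => exp k *
     (Defs.d1 s k * Phi (Defs.d1 s k) * phi (Defs.d2 s k) - Defs.d2 s k * Phi (Defs.d2 s k) * phi (Defs.d1 s k))
     / (s * Phi (Defs.d1 s k) ^ 2))); auto.
  - intros z Hz. assert (Hs0 : z <> 0) by lra. unfold gfun, Defs.d1, Defs.d2. dtac. unfold Rdiv, Rminus. field. split; auto using Phi_neq0.
  - intros z Hz. set (A := Defs.d1 z k). set (B := Defs.d2 z k).
    assert (HAB : B <= A) by (unfold A, B, Defs.d1, Defs.d2; lra).
    assert (HP : PP B <= PP A) by (apply PP_mono; lra).
    assert (E : A * Phi A * phi B - B * Phi B * phi A = phi A * phi B * (PP A - PP B)).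
    { unfold PP. field. split; apply phi_neq0. }
    rewrite E. apply Rdiv_le_0_compat.
    + apply Rmult_le_pos. left; apply exp_pos.
      generalize (phi_pos A) (phi_pos B). intros. apply Rmult_le_pos. nra. lra.
    + apply Rmult_lt_0_compat. lra. apply pow_lt, Phi_pos.
Qed.

Theorem lemma1 :
  (forall k s1 s2 : R, 0 <= k -> 0 < s1 -> s1 <= s2 -> C_D s1 k <= C_D s2 k) /\
  (forall s k1 k2 : R, 0 < s -> 0 <= k1 -> k1 <= k2 -> C_D s k2 <= C_D s k1).
Proof.
  split.
  - intros k s1 s2 _ H1 H2. rewrite !CD_eq. generalize (g_mono_s k s1 s2 H1 H2). lra.
  - intros s k1 k2 H1 _ H2. rewrite !CD_eq. generalize (g_mono_k s k1 k2 H1 H2). lra.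
Qed.
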